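(* Let $\phi\colon[0,+\infty)\to(0,+\infty)$ satisfy $\int_{\mathbb{R}}\min\{1,|x|\}\,\phi(|x|)\,dx<+\infty$ and suppose there is an increasing function $\psi\colon[0,+\infty)\to[0,+\infty)$ such that $$\inf_{t>0}\frac{R^2\phi(Rt)-r^2\phi(rt)}{\phi(t)}\ge\psi(R)-\psi(r)\quad\text{for all }R\ge r\ge0.$$ If $A,B\subset\mathbb{R}$ are segments with $|A|\le|B|$, then, setting $c_\phi=P_\phi((0,1))$, $$P_\phi(A)+c_\phi\big(\psi(|B|)-\psi(|A|)\big)\le P_\phi(B).$$
   Context: For measurable $E\subset\mathbb{R}$, $P_\phi(E)=\frac12\int_{\mathbb{R}}\int_{\mathbb{R}}|\chi_E(x)-\chi_E(y)|\,\phi(|x-y|)\,dx\,dy=\int_E\int_{E^c}\phi(|x-y|)\,dx\,dy$. A segment is a bounded interval of positive length, and $|A|$ denotes its length. *)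

(* Defs.v *)
From HB Require Import structures.
From mathcomp Require Import all_boot all_order all_algebra.
From mathcomp Require Import all_classical all_reals all_analysis.
Set Implicit Arguments. Unset Strict Implicit. Unset Printing Implicit Defensive.
Import Order.TTheory GRing.Theory Num.Theory.
Local Open Scope classical_set_scope.
Local Open Scope ring_scope.
Local Open Scope ereal_scope.

Definition Pphi (R : realType) (phi : R -> R) (E : set R) : \bar R :=
  \int[@lebesgue_measure R]_(x in E)
     \int[@lebesgue_measure R]_(y in ~` E) (phi `|x - y|)%:E.

(* The segment with endpoints a < b; the booleans choose open/closed ends:
   BSide true a = closed at a on the left, BSide false a = open;
   BSide true b = open at b on the right, BSide false b = closed. *)
Definition seg (R : realType) (bl br : bool) (a b : R) : set R :=
  [set` Interval (BSide bl a) (BSide br b)].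

(* Main.v *)
Require Import Defs.
From HB Require Import structures.
From mathcomp Require Import all_boot all_order all_algebra.
From mathcomp Require Import all_classical all_reals all_analysis.
From mathcomp Require Import measurable_realfun.
From mathcomp Require Import ring lra.
Import Order.TTheory GRing.Theory Num.Theory.
Local Open Scope classical_set_scope.
Local Open Scope ring_scope.

Section S.
Variable R : realType.
Local Notation mu := (@lebesgue_measure R).

Lemma mnonneg : measurable [set t : R | 0 <= t].
Proof.
have -> : [set t : R | 0 <= t] = `[0, +oo[%classic.
  by apply/seteqP; split=> x /=; rewrite in_itv/= andbT.
exact: measurable_itv.
Qed.

Lemma mK_comp (K : R -> R) (mK : measurable_fun [set t : R | 0 <= t] K)
  d (T : measurableType d) (h : T -> R) (mh : measurable_fun setT h)
  (h0 : forall x, 0 <= h x) : measurable_fun setT (fun x => K (h x)).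
Proof.
apply: (measurable_comp (F := [set t : R | 0 <= t])) => //.
  exact: mnonneg.
by move=> _ [x _ <-]; exact: h0.
Qed.

Lemma mdiff : measurable_fun setT (fun p : R * R => `|p.1 - p.2|).
Proof.
apply: measurableT_comp; first exact: measurable_realfun.normr_measurable.
exact: measurable_realfun.measurable_funB.
Qed.

Lemma mF (K : R -> R) (mK : measurable_fun [set t : R | 0 <= t] K)
  (K0 : forall t, 0 <= t -> 0 <= K t) (D : set R) (mD : measurable D) :
  measurable_fun setT (fun x : R => (\int[mu]_(y in D) (K `|x - y|)%:E)%E : \bar R).
Proof.
pose f (p : R * R) := ((K `|p.1 - p.2|) * (\1_D p.2))%:E.
have -> : (fun x : R => \int[mu]_(y in D) (K `|x - y|)%:E)%E = fubini_F (T1 := R) mu f.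
  apply/funext => x; rewrite /fubini_F [LHS]integral_mkcond; apply: eq_integral => y _.
  rewrite /patch /f indicE /=; case: ifP => _; by rewrite ?mulr1 ?mulr0.
apply: measurable_fun_fubini_tonelli_F.
  apply/measurable_EFinP; apply: measurable_realfun.measurable_funM.
    have H := @mK_comp K mK _ _ _ mdiff (fun p => normr_ge0 _); exact H.
  have H2 : measurable_fun setT (snd : R * measurableTypeR R -> R).
    exact measurable_snd.
  have H3 := measurableT_comp (measurable_indic mD) H2.
  exact (H3 R).
move=> p; rewrite /f lee_fin; apply: mulr_ge0 => //; exact: K0.
Qed.
Lemma CV (L a : R) (L0 : 0 < L) (D : set R) (mD : measurable D)
  (f : R -> \bar R) (mf : measurable_fun setT f) (f0 : forall x, (0 <= f x)%E) :
  (\int[mu]_(x in D) f x =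
   L%:E * \int[mu]_(u in (fun u : R => L * u + a)%R @^-1` D) f (L * u + a)%R)%E.
Proof.
pose g := fun u : R => L * u + a.
have mg0 : measurable_fun setT g.
  apply: measurable_funD => //; apply: measurable_funM => //.
have mg : measurable_fun (T := measurableTypeR R) (U := measurableTypeR R) setT g.
  exact mg0.
pose nu := @measure_function_pushforward__canonical__measure_function_Measure
  _ _ (measurableTypeR R) (measurableTypeR R) R mu g mg.
pose k : {nonneg R} := NngNum (ltW L0).
have muE : forall A, measurable A -> mu A = mscale k nu A.
  apply: (@lebesgue_measure_unique _ (mscale k nu)) => _ [[x y] _ <-] /=.
  rewrite /mscale /= /pushforward.
  have -> : g @^-1` `]x, y]%classic = `](x - a) / L, (y - a) / L]%classic.
    apply/seteqP; split => u /=; rewrite !in_itv /= /g.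
      move=> /andP[h1 h2]; apply/andP; split.
        by rewrite ltr_pdivrMr // ; lra.
      by rewrite ler_pdivlMr //; lra.
    move=> /andP[]; rewrite ltr_pdivrMr // ler_pdivlMr // => h1 h2.
    apply/andP; split; lra.
  rewrite !lebesgue_measure_itv /= !lte_fin.
  have -> : ((x - a) / L < (y - a) / L) = (x < y).
    by rewrite ltr_pM2r ?invr_gt0 // ltrD2r.
  case: ifP => _; last by rewrite mule0.
  rewrite -!EFinD -EFinM; congr (_%:E); field; exact: lt0r_neq0.
rewrite (eq_measure_integral (mscale k nu)); last by move=> A mA _; exact: muE.
rewrite ge0_integral_mscale //; last exact: measurable_funS mf.
rewrite ge0_integral_pushforward //.
have H := measurable_funS measurableT (@subsetT _ D) mf. exact H.
Qed.
Lemma NS (D1 D2 : set R) (m1 : measurable D1) (m2 : measurable D2)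
  (sub : D1 `<=` D2) (null : mu (D2 `\` D1) = 0%E)
  (f : R -> \bar R) (mf : measurable_fun setT f) (f0 : forall x, (0 <= f x)%E) :
  (\int[mu]_(x in D1) f x = \int[mu]_(x in D2) f x)%E.
Proof.
rewrite -[in RHS](setDUK sub) ge0_integral_setU //.
- rewrite (null_set_integral (T := measurableTypeR R) (N := D2 `\` D1)) ?adde0 //.
    exact: measurableD.
  have H := measurable_funS measurableT (@subsetT _ (D2 `\` D1)) mf. exact H.
- exact: measurableD.
- have H := measurable_funS measurableT (@subsetT _ (D1 `|` D2 `\` D1)) mf. exact H.
- apply/disj_setPS => x [h1 [_ h2]]; exact: h2.
Qed.

Lemma Z01 (S : set R) (mS : measurable S) (h1 : `]0, 1[ `<=` S) (h2 : S `<=` `[0, 1]) :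
  mu (S `\` `]0, 1[) = 0%E.
Proof.
apply: (subset_measure0 (T := measurableTypeR R) (B := [set 0] `|` [set 1])).
- apply: measurableD => //; exact: measurable_itv.
- exact: measurableU.
- move=> x [/h2 + hx]; rewrite /= !in_itv /= => /andP[a b].
  have : ~ (0 < x < 1) by move=> H; apply: hx; rewrite /= in_itv /= H.
  move=> H; case: (eqVneq x 0) => [->|x0]; first by left.
  case: (eqVneq x 1) => [->|x1]; first by right.
  exfalso; apply: H; rewrite !lt_neqAle a b eq_sym x0 x1 //.
- change (mu ([set 0] `|` [set 1]) = 0%E).
  rewrite measureU0 //; exact: lebesgue_measure_set1.
Qed.
Lemma pre_seg bl br (a1 a2 : R) (h : a1 < a2) :
  (fun u : R => (a2 - a1) * u + a1) @^-1` seg bl br a1 a2 = seg bl br 0 1.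
Proof.
set L := a2 - a1.
have hL : L = a2 - a1 by [].
have L0 : 0 < L by rewrite subr_gt0.
apply/seteqP; split=> u; rewrite /seg /= !in_itv /=.
all: have e1 : (a1 <= L * u + a1) = (0 <= u)
       by rewrite -(pmulr_rge0 u L0); apply/idP/idP => ?; lra.
all: have e2 : (a1 < L * u + a1) = (0 < u)
       by rewrite -(pmulr_rgt0 u L0); apply/idP/idP => ?; lra.
all: have e3 : (L * u + a1 <= a2) = (u <= 1)
       by rewrite -[u <= 1](ler_pM2l L0) mulr1; apply/idP/idP => ?; lra.
all: have e4 : (L * u + a1 < a2) = (u < 1)
       by rewrite -[u < 1](ltr_pM2l L0) mulr1; apply/idP/idP => ?; lra.
all: by case: bl; case: br => /=; rewrite ?e1 ?e2 ?e3 ?e4.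
Qed.

Lemma seg01 bl br : `]0, 1[ `<=` seg bl br (0 : R) 1 /\ seg bl br (0 : R) 1 `<=` `[0, 1].
Proof.
split => u; rewrite /seg /= !in_itv /=; case: bl; case: br => /= /andP[h1 h2];
  apply/andP; split => //; by apply: ltW.
Qed.
End S.

Section S2.
Variable R : realType.
Local Notation mu := (@lebesgue_measure R).

Definition J (K : R -> R) : \bar R :=
  (\int[mu]_(u in `]0%R, 1%R[) \int[mu]_(v in ~` `[0%R, 1%R]) (K `|u - v|)%:E)%E.

Lemma mS (D : set R) (f : R -> \bar R) : measurable_fun setT f ->
  measurable_fun (T := measurableTypeR R) D f.
Proof. move=> mf; have H := measurable_funS measurableT (@subsetT _ D) mf; exact H. Qed.

Lemma mK1 (K : R -> R) (mK : measurable_fun [set t : R | 0 <= t] K) (x : R) :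
  measurable_fun setT (fun y : R => (K `|x - y|)%:E).
Proof.
apply/measurable_EFinP; apply: (@mK_comp R K mK _ _ (fun y : R => `|x - y|)) => //.
apply: measurableT_comp; first exact: normr_measurable.
by apply: measurable_funB.
Qed.

Lemma JZ (K : R -> R) (mK : measurable_fun [set t : R | 0 <= t] K)
  (K0 : forall t, 0 <= t -> 0 <= K t) (c : R) (c0 : 0 <= c) :
  J (fun t => c * K t) = (c%:E * J K)%E.
Proof.
rewrite /J; transitivity (\int[mu]_(u in `]0%R, 1%R[)
   (c%:E * \int[mu]_(v in ~` `[0%R, 1%R]) (K `|u - v|)%:E))%E.
  apply eq_integral => u _; rewrite -ge0_integralZl //.
  + apply: measurableC; exact: measurable_itv.
  + apply: mS; exact: mK1.
  + by move=> v _; rewrite lee_fin; apply: K0.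
rewrite ge0_integralZl //.
- apply: mS; apply: mF => //; apply: measurableC; exact: measurable_itv.
- move=> u _; apply: integral_ge0 => v _; rewrite lee_fin; exact: K0.
Qed.

Lemma JD (K1 K2 : R -> R) (mKa : measurable_fun [set t : R | 0 <= t] K1)
  (mKb : measurable_fun [set t : R | 0 <= t] K2)
  (K10 : forall t, 0 <= t -> 0 <= K1 t) (K20 : forall t, 0 <= t -> 0 <= K2 t) :
  J (fun t => K1 t + K2 t) = (J K1 + J K2)%E.
Proof.
have mC : measurable (~` `[0%R, 1%R] : set R) by apply: measurableC; exact: measurable_itv.
rewrite /J; transitivity (\int[mu]_(u in `]0%R, 1%R[)
   (\int[mu]_(v in ~` `[0%R, 1%R]) (K1 `|u - v|)%:E
    + \int[mu]_(v in ~` `[0%R, 1%R]) (K2 `|u - v|)%:E))%E.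
  apply eq_integral => u _; rewrite -ge0_integralD //.
  + by move=> v _; rewrite lee_fin; apply: K10.
  + apply: mS; exact: (mK1 _ mKa _).
  + by move=> v _; rewrite lee_fin; apply: K20.
  + apply: mS; exact: (mK1 _ mKb _).
rewrite ge0_integralD //.
- move=> u _; apply: integral_ge0 => v _; rewrite lee_fin; exact: K10.
- apply: mS; exact: (@mF R _ mKa K10 _ mC).
- move=> u _; apply: integral_ge0 => v _; rewrite lee_fin; exact: K20.
- apply: mS; exact: (@mF R _ mKb K20 _ mC).
Qed.

Lemma Jle (K1 K2 : R -> R) (mKa : measurable_fun [set t : R | 0 <= t] K1)
  (mKb : measurable_fun [set t : R | 0 <= t] K2)
  (K10 : forall t, 0 <= t -> 0 <= K1 t) (K20 : forall t, 0 <= t -> 0 <= K2 t)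
  (le12 : forall t, 0 < t -> K1 t <= K2 t) :
  (J K1 <= J K2)%E.
Proof.
have mC : measurable (~` `[0%R, 1%R] : set R) by apply: measurableC; exact: measurable_itv.
rewrite /J; apply: ge0_le_integral => //.
- move=> u _; apply: integral_ge0 => v _; rewrite lee_fin; exact: K10.
- apply: mS; exact: (@mF R _ mKa K10 _ mC).
- apply: mS; exact: (@mF R _ mKb K20 _ mC).
move=> u hu; apply: ge0_le_integral => //.
- by move=> v _; rewrite lee_fin; apply: K10.
- apply: mS; exact: (mK1 _ mKa _).
- apply: mS; exact: (mK1 _ mKb _).
move=> v hv; rewrite lee_fin; apply: le12.
rewrite normr_gt0 subr_eq0; apply/eqP => uv; apply: hv; rewrite -uv.
move: hu; rewrite /= !in_itv /= => /andP[h1 h2]; apply/andP; split; exact: ltW.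
Qed.

Lemma SegJ bl br (K : R -> R) (mK : measurable_fun [set t : R | 0 <= t] K)
  (K0 : forall t, 0 <= t -> 0 <= K t) :
  (\int[mu]_(u in seg bl br 0 1) \int[mu]_(v in ~` seg bl br 0 1) (K `|u - v|)%:E)%E
  = J K.
Proof.
have [s1 s2] := seg01 R bl br.
have mS0 : measurable (seg bl br 0 1 : set R) by rewrite /seg; exact: measurable_itv.
have mC : measurable (~` `[0%R, 1%R] : set R) by apply: measurableC; exact: measurable_itv.
have mSc : measurable (~` seg bl br 0 1 : set R) by exact: measurableC.
have mZ : measurable (`[0%R, 1%R] `\` `]0%R, 1%R[ : set R).
  by apply: measurableD; exact: measurable_itv.
transitivity (\int[mu]_(u in seg bl br 0 1) \int[mu]_(v in ~` `[0%R, 1%R]) (K `|u - v|)%:E)%E.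
  apply eq_integral => u _; symmetry; apply: NS => //.
  - by move=> v hv hS; apply: hv; apply: s2.
  - apply: (subset_measure0 (T := measurableTypeR R) (B := `[0%R, 1%R] `\` `]0%R, 1%R[)).
    + exact: measurableD.
    + exact: mZ.
    + move=> v [hS hC]; split.
        by apply: contrapT.
      by move=> /s1.
    + apply: Z01 => //.
      by move=> v /=; rewrite !in_itv /= => /andP[h1 h2]; apply/andP; split; apply: ltW.
  - have H := mK1 _ mK u; exact H.
  - by move=> v; rewrite lee_fin; apply: K0.
rewrite /J; symmetry; apply: NS => //.
- exact: Z01.
- have H := @mF R _ mK K0 _ mC; exact H.
- move=> u; apply: integral_ge0 => v _; rewrite lee_fin; exact: K0.
Qed.

Lemma mKL (phi : R -> R) (mphi : measurable_fun [set t : R | 0 <= t] phi) (L : R)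
  (L0 : 0 <= L) : measurable_fun [set t : R | 0 <= t] (fun t => phi (L * t)).
Proof.
apply: (measurable_comp (mnonneg R) _ mphi).
- by move=> _ [t t0 <-]; apply: mulr_ge0.
- by apply: measurable_funM.
Qed.

Lemma mcKL (phi : R -> R) (mphi : measurable_fun [set t : R | 0 <= t] phi) (c L : R)
  (L0 : 0 <= L) : measurable_fun [set t : R | 0 <= t] (fun t => c * phi (L * t)).
Proof. apply: measurable_funM => //; exact: mKL. Qed.

Lemma Preduce (phi : R -> R) (mphi : measurable_fun [set t : R | 0 <= t] phi)
  (phi0 : forall t, 0 <= t -> 0 < phi t) bl br (a1 a2 : R) (h : a1 < a2) :
  Pphi phi (seg bl br a1 a2) =
  J (fun t => (a2 - a1) ^+ 2 * phi ((a2 - a1) * t)).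
Proof.
have L0 : 0 < a2 - a1 by rewrite subr_gt0.
have phi0' : forall t, 0 <= t -> 0 <= phi t by move=> t /phi0 /ltW.
have mA : measurable (seg bl br a1 a2 : set R) by rewrite /seg; exact: measurable_itv.
have mAc : measurable (~` seg bl br a1 a2 : set R) by exact: measurableC.
have mSc : measurable (~` seg bl br 0 1 : set R).
  by apply: measurableC; rewrite /seg; exact: measurable_itv.
have mKL' := mKL _ mphi _ (ltW L0).
have KL0 : forall t, 0 <= t -> 0 <= phi ((a2 - a1) * t).
  by move=> t t0; apply: phi0'; apply: mulr_ge0 => //; exact: ltW.
have mF0 := @mF R _ mphi phi0' _ mAc.
have F0 : forall x, (0 <= \int[mu]_(y in ~` seg bl br a1 a2) (phi `|x - y|)%:E)%E.
  by move=> x; apply: integral_ge0 => y _; rewrite lee_fin; apply: phi0'.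
rewrite /Pphi (@CV R (a2 - a1) a1 L0 _ mA _ mF0 F0) (@pre_seg R _ _ _ _ h).
rewrite -(@SegJ bl br _ (mcKL _ mphi _ _ (ltW L0))); last first.
  by move=> t t0; apply: mulr_ge0; [exact: sqr_ge0 | exact: KL0].
have mG := @mF R _ mKL' KL0 _ mSc.
have G0 : forall u, (0 <= \int[mu]_(v in ~` seg bl br 0 1) (phi ((a2 - a1) * `|u - v|))%:E)%E.
  by move=> u; apply: integral_ge0 => y _; rewrite lee_fin; apply: KL0.
transitivity ((a2 - a1)%:E * \int[mu]_(u in seg bl br 0 1)
   ((a2 - a1)%:E * \int[mu]_(v in ~` seg bl br 0 1) (phi ((a2 - a1) * `|u - v|))%:E))%E.
  congr (_ * _)%E; apply eq_integral => u _.
  have mf1 := mK1 _ mphi ((a2 - a1) * u + a1).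
  have f10 : forall y, (0 <= (phi `|(a2 - a1) * u + a1 - y|)%:E)%E.
    by move=> y; rewrite lee_fin; apply: phi0'.
  rewrite (@CV R (a2 - a1) a1 L0 _ mAc _ mf1 f10) -preimage_setC (@pre_seg R _ _ _ _ h).
  congr (_ * _)%E; apply eq_integral => v _.
  rewrite (_ : (a2 - a1) * u + a1 - ((a2 - a1) * v + a1) = (a2 - a1) * (u - v)); last by ring.
  by rewrite normrM (gtr0_norm L0).
rewrite ge0_integralZl //.
transitivity (((a2 - a1) ^+ 2)%:E * \int[mu]_(u in seg bl br 0 1)
   \int[mu]_(v in ~` seg bl br 0 1) (phi ((a2 - a1) * `|u - v|))%:E)%E.
  by rewrite muleA -EFinM expr2.
rewrite -ge0_integralZl //.
apply eq_integral => u _; rewrite -ge0_integralZl //.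
all: try (by apply: mS; exact: (mK1 _ mKL' _)).
all: try (by move=> x _; rewrite lee_fin; apply: KL0).
all: try (by rewrite lee_fin; apply: sqr_ge0).
all: try (by rewrite /seg; exact: measurable_itv).
all: try (by apply: mS; exact: mG).
all: try (by move=> x _; apply: G0).
all: by rewrite lee_fin; apply: ltW.
Qed.

End S2.

Theorem mainTheorem8 (R : realType) (phi psi : R -> R)
  (phi_pos : forall t, 0 <= t -> 0 < phi t)
  (phi_meas : measurable_fun [set t : R | 0 <= t] phi)
  (phi_int : (\int[@lebesgue_measure R]_(x in [set: R])
                 (Num.min 1 `|x| * phi `|x|)%:E < +oo)%E)
  (psi_nneg : forall t, 0 <= t -> 0 <= psi t)
  (psi_incr : forall s t, 0 <= s -> s <= t -> psi s <= psi t)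
  (psi_cond : forall Rr r, 0 <= r -> r <= Rr -> forall t, 0 < t ->
       (Rr ^+ 2 * phi (Rr * t) - r ^+ 2 * phi (r * t)) / phi t >= psi Rr - psi r)
  (blA brA blB brB : bool) (a1 a2 b1 b2 : R)
  (hA : a1 < a2) (hB : b1 < b2) (hAB : a2 - a1 <= b2 - b1) :
  (Pphi phi (seg blA brA a1 a2)
   + Pphi phi (seg false true 0 1) * (psi (b2 - b1) - psi (a2 - a1))%:E
   <= Pphi phi (seg blB brB b1 b2))%E.
Proof.
have phi0 : forall t, 0 <= t -> 0 <= phi t by move=> t /phi_pos /ltW.
rewrite (@Preduce R phi phi_meas phi_pos _ _ _ _ hA).
rewrite (@Preduce R phi phi_meas phi_pos _ _ _ _ hB).
rewrite (@Preduce R phi phi_meas phi_pos _ _ _ _ ltr01).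
have r0 : 0 < a2 - a1 by rewrite subr_gt0.
have R0 : 0 < b2 - b1 by rewrite subr_gt0.
have d0 : 0 <= psi (b2 - b1) - psi (a2 - a1).
  by rewrite subr_ge0; apply: psi_incr => //; exact: ltW.
have K0 : forall L, 0 <= L -> forall t, 0 <= t -> 0 <= L ^+ 2 * phi (L * t).
  by move=> L L0 t t0; apply: mulr_ge0; [exact: sqr_ge0 | apply: phi0; exact: mulr_ge0].
have mK : forall L, 0 <= L -> measurable_fun [set t : R | 0 <= t] (fun t => L ^+ 2 * phi (L * t)).
  by move=> L L0; apply: mcKL.
have h10 : (0:R) <= 1 - 0 by rewrite subr0.
have m1 := mK _ h10.
have mdK : measurable_fun [set t : R | 0 <= t]
    (fun t => (psi (b2 - b1) - psi (a2 - a1)) * ((1 - 0) ^+ 2 * phi ((1 - 0) * t))).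
  by apply: measurable_funM.
have dK0 : forall t, 0 <= t ->
    0 <= (psi (b2 - b1) - psi (a2 - a1)) * ((1 - 0) ^+ 2 * phi ((1 - 0) * t)).
  by move=> t t0; apply: mulr_ge0 => //; apply: K0.
rewrite muleC -(@JZ R _ m1 (K0 _ h10)) // -(@JD R _ _ (mK _ (ltW r0)) mdK (K0 _ (ltW r0)) dK0).
apply: Jle.
- by apply: measurable_funD => //; apply: mK; exact: ltW.
- by apply: mK; exact: ltW.
- by move=> t t0; apply: addr_ge0; [apply: K0 => //; exact: ltW | exact: dK0].
- by apply: K0; exact: ltW.
move=> t t0.
have := psi_cond (b2 - b1) (a2 - a1) (ltW r0) hAB t t0.
rewrite ler_pdivlMr; last by apply: phi_pos; exact: ltW.
rewrite subr0 expr1n !mul1r => hle.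
lra.
Qed.
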